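(* Let $\beta\ge 1$ and let $\overline R$ and $R$ be two consecutive $\beta$-bounded $T$-coverings (i.e. the initial state of $R$ equals the final state of $\overline R$) in a congestion game in which every delay function is $f(x)=x$, and assume $\mathrm{OPT}>0$. Then $$\frac{\rho(R)}{\mathrm{OPT}}\le 2\sqrt{2\,\frac{\rho(\overline R)}{\mathrm{OPT}}}+4\beta+1.$$
   Context: A congestion game has players $N=\{1,\dots,n\}$, a finite resource set $E$ and strategy sets $\Sigma_i\subseteq 2^E$. For a profile $S=(s_1,\dots,s_n)$, $n_e(S)=|\{i: e\in s_i\}|$. Here all delays are $f(x)=x$, so the cost of player $i$ is $c_i(S)=\sum_{e\in s_i}n_e(S)$ and the social cost is $C(S)=\sum_i c_i(S)=\sum_{e\in E}n_e(S)^2$. Fix an optimal profile $S^*=(s_1^*,\dots,s_n^* )$ minimizing $C$ and write $\mathrm{OPT}=C(S^* )$. A best response of player $i$ in $S$ is a strategy $s_i^b\in\Sigma_i$ minimizing $c_i(S_{-i},\cdot)$ over $\Sigma_i$ (where $(S_{-i},s_i')$ replaces $s_i$ by $s_i'$); if no strategy strictly decreases $i$'s cost, the best response is $s_i$ itself. A $T$-covering is a sequence of profiles $R=(S^0,\dots,S^T)$ together with players $\pi(1),\dots,\pi(T)$ such that for each $1\le t\le T$, $S^t=(S^{t-1}_{-\pi(t)},s')$ where $s'$ is a best response of $\pi(t)$ in $S^{t-1}$, and every player of $N$ occurs at least once among $\pi(1),\dots,\pi(T)$. It is $\beta$-bounded if every player occurs at most $\beta$ times among $\pi(1),\dots,\pi(T)$.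 For each player $i$, $\mathrm{last}_R(i)=\max\{t:\pi(t)=i\}$. Define $\rho(R)=\sum_{i=1}^n\sum_{e\in s_i^*}\bigl(n_e(S^{\mathrm{last}_R(i)-1})+1\bigr)$, where $S^t$ are the states of $R$. *)

(* Defs.v *)
From Stdlib Require Import Reals.
From mathcomp Require Import all_boot.
Delimit Scope R_scope with Re.
Set Implicit Arguments. Unset Strict Implicit. Unset Printing Implicit Defensive.

Section CongestionGame.
Variables (E : finType) (n : nat).

Definition profile := {ffun 'I_n -> {set E}}.

Definition upd (S : profile) (i : 'I_n) (s : {set E}) : profile :=
  [ffun j => if j == i then s else S j].

Definition load (S : profile) (e : E) : nat := #|[set i | e \in S i]|.

Definition cost (S : profile) (i : 'I_n) : nat := \sum_(e in S i) load S e.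

Definition social_cost (S : profile) : nat := \sum_(i < n) cost S i.

Variable Sigma : 'I_n -> {set {set E}}.

Definition feasible (S : profile) : Prop := forall i, S i \in Sigma i.

Definition is_optimal (Sstar : profile) : Prop :=
  feasible Sstar /\ forall S, feasible S -> social_cost Sstar <= social_cost S.

Definition best_response (S : profile) (i : 'I_n) (s' : {set E}) : Prop :=
  [/\ s' \in Sigma i,
      (forall s'', s'' \in Sigma i -> cost (upd S i s') i <= cost (upd S i s'') i)
    & ((forall s'', s'' \in Sigma i -> cost S i <= cost (upd S i s'') i) ->
       s' = S i)].

(* A T-covering: states St 0 .. St T, players pi 1 .. pi T
   (values of St, pi outside these ranges are irrelevant). The initial state
   is a feasible profile. *)
Definition T_covering (T : nat) (St : nat -> profile) (pi : nat -> 'I_n) : Prop :=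
  [/\ feasible (St 0),
      (forall t, 1 <= t <= T ->
         exists s', best_response (St t.-1) (pi t) s' /\
                    St t = upd (St t.-1) (pi t) s')
    & (forall i : 'I_n, exists t, 1 <= t <= T /\ pi t = i)].

Definition beta_bounded (beta T : nat) (pi : nat -> 'I_n) : Prop :=
  forall i : 'I_n, count (fun t => pi t == i) (iota 1 T) <= beta.

Definition last_move (T : nat) (pi : nat -> 'I_n) (i : 'I_n) : nat :=
  \max_(t < T.+1 | (1 <= t) && (pi t == i)) t.

Definition rho (Sstar : profile) (T : nat) (St : nat -> profile)
    (pi : nat -> 'I_n) : nat :=
  \sum_(i < n) \sum_(e in Sstar i) (load (St (last_move T pi i).-1) e + 1).

End CongestionGame.

(* Main.v *)
Require Import Defs.
From Stdlib Require Import Reals Lia Psatz.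
From mathcomp Require Import all_boot.
Set Implicit Arguments. Unset Strict Implicit. Unset Printing Implicit Defensive.

Lemma two_mul_le (x y : nat) : 2 * (x * y) <= x * x + y * y.
Proof.
wlog le: x y / y <= x.
  move=> H; case: (leqP y x) => h; first exact: H.
  by rewrite [x * y]mulnC addnC; apply: H; exact: ltnW.
rewrite -(subnK le); set d := x - y.
rewrite !mulnDl !mulnDr; rewrite mul2n -addnn.
apply/leP; rewrite -!plusE -!multE; lia.
Qed.

Section H.
Variables (E : finType) (n : nat).

Lemma exch (S : profile E n) (f : E -> nat) :
  \sum_(i < n) \sum_(e in S i) f e = \sum_(e : E) load S e * f e.
Proof.
rewrite (eq_bigr (fun i => \sum_e (if e \in S i then f e else 0))); last first.
  by move=> i _; rewrite big_mkcond.
rewrite exchange_big /=; apply: eq_bigr => e _.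
rewrite -big_mkcond /= -sum_nat_const /load.
by apply: eq_bigl => i; rewrite inE.
Qed.

Lemma exch2 (S : profile E n) (g : 'I_n -> E -> nat) :
  \sum_(i < n) \sum_(e in S i) g i e = \sum_(e : E) \sum_(i | e \in S i) g i e.
Proof.
rewrite (eq_bigr (fun i => \sum_e (if e \in S i then g i e else 0))); last first.
  by move=> i _; rewrite big_mkcond.
by rewrite exchange_big /=; apply: eq_bigr => e _; rewrite [RHS]big_mkcond.
Qed.

Lemma social_exch (S : profile E n) :
  social_cost S = \sum_(e : E) load S e * load S e.
Proof. exact: exch. Qed.

Lemma load_upd_le (S : profile E n) i (s : {set E}) (e : E) : load (upd S i s) e <= load S e + 1.
Proof.
rewrite /load; apply: (@leq_trans #|i |: [set j | e \in S j]|).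
  apply: subset_leq_card; apply/subsetP => j; rewrite !inE ffunE.
  by case: eqP => [->|_ ->]; rewrite ?eqxx ?orbT.
by rewrite cardsU1 addnC leq_add2l leq_b1.
Qed.

Lemma load_upd_notin (S : profile E n) i (s : {set E}) (e : E) : e \notin s -> load (upd S i s) e <= load S e.
Proof.
move=> es; rewrite /load; apply: subset_leq_card; apply/subsetP => j; rewrite !inE ffunE.
by case: eqP => [_ h|_ ->]; first by rewrite h in es.
Qed.

Lemma upd_at (S : profile E n) i s : upd S i s i = s.
Proof. by rewrite ffunE eqxx. Qed.

Lemma upd_ne (S : profile E n) i j s : j != i -> upd S i s j = S j.
Proof. by rewrite ffunE => /negbTE ->. Qed.

Variable Sigma : 'I_n -> {set {set E}}.

Lemma br_bound (S : profile E n) i s' ss : best_response Sigma S i s' -> ss \in Sigma i ->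
  cost (upd S i s') i <= \sum_(e in ss) (load S e + 1).
Proof.
case=> _ H _ hss; apply: leq_trans (H _ hss) _.
rewrite /cost upd_at; apply: leq_sum => e _; exact: load_upd_le.
Qed.

End H.

Lemma count_pairs (I : finType) (A : {set I}) (t : I -> nat) :
  #|A| * #|A| <= 2 * \sum_(i in A) #|[set j in A | t j <= t i]|.
Proof.
have E1 i : #|[set j in A | t j <= t i]| = \sum_(j in A) (t j <= t i : nat).
  rewrite -sum1dep_card big_mkcond /= [RHS]big_mkcond /=.
  by apply: eq_bigr => j _; case: (j \in A) => //; case: (t j <= t i).
under eq_bigr do rewrite E1.
rewrite mul2n -addnn {2}(exchange_big _ _ _ (mem A) (mem A)) /= -big_split /=.
rewrite -{1}sum1_card big_distrl /=; apply: leq_sum => i iA.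
rewrite mul1n -big_split /= -sum1_card; apply: leq_sum => j jA.
by case: (leqP (t j) (t i)) => [//|h]; rewrite (ltnW h).
Qed.

Section Cov.
Variables (E : finType) (n : nat) (Sigma : 'I_n -> {set {set E}}).
Variables (T : nat) (St : nat -> profile E n) (pi : nat -> 'I_n).
Hypothesis Hstep : forall t, 1 <= t <= T ->
  exists s', best_response Sigma (St t.-1) (pi t) s' /\ St t = upd (St t.-1) (pi t) s'.

Lemma step_cost (ss : {set E}) t : 1 <= t <= T -> ss \in Sigma (pi t) ->
  cost (St t) (pi t) <= \sum_(e in ss) (load (St t.-1) e + 1).
Proof.
move=> ht hs; have [s' [hb ->]] := Hstep ht; exact: br_bound hb hs.
Qed.

Lemma last_le i : last_move T pi i <= T.
Proof. by apply/bigmax_leqP => t _; rewrite -ltnS. Qed.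

Lemma last_props i : (exists t, 1 <= t <= T /\ pi t = i) ->
  [/\ 1 <= last_move T pi i <= T, pi (last_move T pi i) = i &
      forall u, 1 <= u <= T -> pi u = i -> u <= last_move T pi i].
Proof.
case=> t0 [/andP [h1 h2] h3].
have Hub u : 1 <= u <= T -> pi u = i -> u <= last_move T pi i.
  move=> /andP [u1 u2] ui.
  have := @leq_bigmax_cond _ (fun t : 'I_T.+1 => (1 <= t) && (pi t == i))
              (fun t : 'I_T.+1 => nat_of_ord t) (Ordinal (u2 : u < T.+1)).
  by rewrite /= u1 ui eqxx => /(_ isT).
have Hl : (last_move T pi i == 0) || ((1 <= last_move T pi i) && (pi (last_move T pi i) == i)).
  rewrite /last_move; apply: (big_ind (fun x => (x == 0) || ((1 <= x) && (pi x == i)))) => //.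
    by move=> x y hx hy; rewrite /maxn; case: ltnP.
  by move=> j ->; rewrite orbT.
have tl := Hub t0 (introT andP (conj h1 h2)) h3.
have l1 : 1 <= last_move T pi i by apply: leq_trans tl.
move: Hl; rewrite (negbTE (lt0n_neq0 l1)) /= => /andP [_ /eqP pl].
by split => //; rewrite l1 last_le.
Qed.

Lemma stable i : (exists t, 1 <= t <= T /\ pi t = i) ->
  forall u, last_move T pi i <= u <= T -> St u i = St (last_move T pi i) i.
Proof.
move=> /last_props [/andP [l1 lT] pl Hub].
set l := last_move T pi i in l1 lT pl Hub *.
move=> u /andP [lu uT]; rewrite -(subnK lu) in uT *.
elim: (u - l) uT => [//|k IH] hk.
have hk' : k + l <= T by apply: leq_trans hk; rewrite addSn.
have hs : 1 <= (k.+1 + l) <= T by rewrite hk andbT addSn.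
have [s' [_ ->]] := Hstep hs.
have ne : i != pi (k.+1 + l).
  apply/eqP => ei; have := Hub _ hs (esym ei).
  by rewrite addSn ltnNge leq_addl.
by rewrite upd_ne // addSn /= IH.
Qed.

End Cov.

Section Bar.
Variables (E : finType) (n : nat) (Sigma : 'I_n -> {set {set E}}).
Variables (T : nat) (St : nat -> profile E n) (pi : nat -> 'I_n) (Sstar : profile E n).
Hypothesis Hstep : forall t, 1 <= t <= T ->
  exists s', best_response Sigma (St t.-1) (pi t) s' /\ St t = upd (St t.-1) (pi t) s'.
Hypothesis Hcov : forall i : 'I_n, exists t, 1 <= t <= T /\ pi t = i.
Hypothesis Hfs : forall i, Sstar i \in Sigma i.

Lemma final_cost_le : social_cost (St T) <= 2 * rho Sstar T St pi.
Proof.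
set tb := last_move T pi.
rewrite social_exch.
have H1 e : load (St T) e * load (St T) e <=
    2 * \sum_(i | e \in St T i) load (St (tb i)) e.
  have := count_pairs [set j | e \in St T j] tb.
  rewrite -/(load (St T) e) => /leq_trans; apply.
  rewrite leq_mul2l /=; rewrite big_mkcond [X in _ <= X]big_mkcond /=.
  apply: leq_sum => i _; rewrite inE; case: ifP => // eFi.
  apply: subset_leq_card; apply/subsetP => j; rewrite !inE => /andP [eFj tji].
  have [/andP [l1 lT] _ _] := last_props (Hcov i).
  rewrite (stable Hstep (Hcov j) (u := tb i)) ?tji //.
  have := stable Hstep (Hcov j) (u := T); rewrite last_le leqnn => /(_ isT) <-.
  done.
have := @leq_sum _ (index_enum E) xpredT _ _ (fun e _ => H1 e).
move/leq_trans; apply.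
rewrite -big_distrr /= leq_mul2l /= -exch2 /rho; apply: leq_sum => i _.
rewrite /tb.
have [hl pl _] := last_props (Hcov i).
have st := stable Hstep (Hcov i) (u := T).
move: hl pl st; move: (last_move T pi i) => l hl pl st.
subst i.
have := @step_cost _ _ _ _ _ _ Hstep (Sstar (pi l)) _ hl (Hfs (pi l)).
by rewrite /cost st //; case/andP: hl => _ -> /=.
Qed.

End Bar.

Lemma sq_step (a b : nat) : a <= b + 1 -> a * a <= b * b + 2 * a.
Proof.
case: a => [//|a]; rewrite addn1 ltnS => h.
have h2 := leq_mul h h.
apply/leP; move/leP: h2; rewrite -!plusE -!multE; lia.
Qed.

Section RR.
Variables (E : finType) (n : nat) (Sigma : 'I_n -> {set {set E}}).
Variables (T : nat) (St : nat -> profile E n) (pi : nat -> 'I_n) (Sstar : profile E n).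
Variable beta : nat.
Hypothesis Hstep : forall t, 1 <= t <= T ->
  exists s', best_response Sigma (St t.-1) (pi t) s' /\ St t = upd (St t.-1) (pi t) s'.
Hypothesis Hfs : forall i, Sstar i \in Sigma i.
Hypothesis Hbeta : beta_bounded beta T pi.

Definition M e := \max_(t < T.+1) load (St t) e.
Definition Z := \sum_(e : E) load Sstar e * M e.

Lemma rho_le : rho Sstar T St pi <= Z + social_cost Sstar.
Proof.
apply: (@leq_trans (\sum_(i < n) \sum_(e in Sstar i) (M e + 1))).
  apply: leq_sum => i _; apply: leq_sum => e _; rewrite leq_add2r.
  have h : (last_move T pi i).-1 < T.+1 by rewrite ltnS (leq_trans (leq_pred _)) // last_le.
  exact: (@leq_bigmax _ (fun t : 'I_T.+1 => load (St t) e) (Ordinal h)).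
rewrite exch social_exch /Z -big_split /=; apply: leq_sum => e _.
rewrite mulnDr muln1 leq_add2l; case: (load Sstar e) => [//|k]; exact: leq_pmulr.
Qed.



Definition g u e := if e \in St u (pi u) then load (St u) e else 0.

Lemma sq_bound e t : t <= T -> load (St t) e * load (St t) e <=
  load (St 0) e * load (St 0) e + 2 * \sum_(1 <= u < t.+1) g u e.
Proof.
elim: t => [_|t IH ht]; first by rewrite big_geq // addn0.
rewrite big_nat_recr //= mulnDr addnA.
have hs : 1 <= t.+1 <= T by rewrite ht.
have [s' [_ E1]] := Hstep hs.
have IH' := IH (ltnW ht).
rewrite /g E1 /= upd_at.
case: ifP => es.
  apply: leq_trans (sq_step (load_upd_le (St t) (pi t.+1) s' e)) _.
  by rewrite leq_add2r.
rewrite muln0 addn0; apply: leq_trans IH'.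
have h := load_upd_notin (St t) (pi t.+1) (negbT es).
exact: leq_mul.
Qed.

Lemma M_sq : \sum_(e : E) M e * M e <=
  social_cost (St 0) + 2 * \sum_(1 <= u < T.+1) cost (St u) (pi u).
Proof.
have H e : M e * M e <= load (St 0) e * load (St 0) e + 2 * \sum_(1 <= u < T.+1) g u e.
  rewrite /M; apply: (big_ind (fun x => x * x <= _)) => //.
    by move=> x y hx hy; rewrite /maxn; case: ltnP.
  move=> t _; apply: leq_trans (sq_bound e (ltn_ord t : t <= T)) _.
  rewrite leq_add2l leq_mul2l /=.
  rewrite (@big_cat_nat _ _ _ t.+1 1 T.+1) //= ?leq_addr //.
have := @leq_sum _ (index_enum E) xpredT _ _ (fun e _ => H e).
move/leq_trans; apply.
rewrite big_split /= social_exch leq_add2l -big_distrr /= leq_mul2l /=.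
rewrite exchange_big /=; apply: leq_sum => u _.
by rewrite /cost [X in _ <= X]big_mkcond /=; apply: leq_sum => e _; rewrite /g.
Qed.

Lemma cs_nat (I : finType) (a b : I -> nat) : 0 < \sum_i a i * a i ->
  (\sum_i a i * b i) * (\sum_i a i * b i) <= (\sum_i a i * a i) * (\sum_i b i * b i).
Proof.
set A := \sum_i a i * a i; set B := \sum_i b i * b i; set X := \sum_i a i * b i => A0.
have H i : 2 * (X * A) * (a i * b i) <= (X * X) * (a i * a i) + (A * A) * (b i * b i).
  have := two_mul_le (X * a i) (A * b i).
  have -> : 2 * (X * a i * (A * b i)) = 2 * (X * A) * (a i * b i).
    by rewrite -!multE; ring.
  have -> : X * a i * (X * a i) + A * b i * (A * b i) = X * X * (a i * a i) + A * A * (b i * b i).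
    by rewrite -!multE -!plusE; ring.
  done.
have := @leq_sum _ (index_enum I) xpredT _ _ (fun i _ => H i).
rewrite big_split /= -!big_distrr /= -/A -/B -/X.
have -> : 2 * (X * A) * X = X * X * A + A * (X * X) by rewrite -!multE -!plusE; ring.
by rewrite leq_add2l -mulnA leq_pmul2l.
Qed.

Lemma h_sum : \sum_(i < n) \sum_(e in Sstar i) (M e + 1) <= Z + social_cost Sstar.
Proof.
rewrite exch social_exch /Z -big_split /=; apply: leq_sum => e _.
rewrite mulnDr muln1 leq_add2l; case: (load Sstar e) => [//|k]; exact: leq_pmulr.
Qed.

Lemma CS : 0 < social_cost Sstar -> Z * Z <= social_cost Sstar * \sum_(e : E) M e * M e.
Proof. rewrite social_exch /Z; exact: cs_nat. Qed.

Lemma costs_le : \sum_(1 <= u < T.+1) cost (St u) (pi u) <= beta * (Z + social_cost Sstar).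
Proof.
set h := fun j => \sum_(e in Sstar j) (M e + 1).
apply: (@leq_trans (\sum_(1 <= u < T.+1) h (pi u))).
  rewrite big_nat_cond [X in _ <= X]big_nat_cond; apply: leq_sum => u /andP [/andP [u1 uT] _].
  have hu : 1 <= u <= T by rewrite u1 -ltnS.
  apply: leq_trans (step_cost Hstep hu (Hfs (pi u))) _.
  apply: leq_sum => e _; rewrite leq_add2r.
  have hh : u.-1 < T.+1 by rewrite ltnS (leq_trans (leq_pred _)) // -ltnS.
  exact: (@leq_bigmax _ (fun t : 'I_T.+1 => load (St t) e) (Ordinal hh)).
have E2 : \sum_(1 <= u < T.+1) h (pi u) =
    \sum_(j < n) (\sum_(1 <= u < T.+1 | pi u == j) 1) * h j.
  transitivity (\sum_(1 <= u < T.+1) \sum_(j < n) (if pi u == j then h j else 0)).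
    apply: eq_bigr => u _; rewrite -big_mkcond /= (big_pred1 (pi u)) //.
  rewrite exchange_big /=; apply: eq_bigr => j _.
  by rewrite big_distrl /= -big_mkcond /=; apply: eq_bigr => u _; rewrite mul1n.
rewrite E2; apply: (@leq_trans (\sum_(j < n) beta * h j)).
  apply: leq_sum => j _; rewrite leq_mul2r; apply/orP; right.
  by rewrite sum1_count /index_iota subSS subn0; exact: Hbeta.
by rewrite -big_distrr /= leq_mul2l h_sum orbT.
Qed.
End RR.

Section Real.
Local Open Scope R_scope.

Lemma real_final (rho rhob C0 Z O beta : nat) : (0 < O)%N -> (1 <= beta)%N ->
  (C0 <= 2 * rhob)%N -> (rho <= Z + O)%N -> (Z * Z <= O * (C0 + 2 * (beta * (Z + O))))%N ->
  INR rho / INR O <= 2 * sqrt (2 * (INR rhob / INR O)) + 4 * INR beta + 1.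
Proof.
move=> /ltP hO /leP hb /leP h1 /leP h2 /leP h3.
apply le_INR in hO; apply le_INR in hb; apply le_INR in h1; apply le_INR in h2; apply le_INR in h3.
rewrite -!multE -!plusE in h1 h2 h3.
rewrite !mult_INR !plus_INR in h1 h2 h3.
rewrite /= in hO hb h1 h2 h3.
rewrite ?mult_INR ?plus_INR ?Rplus_0_r in h3.
set o := INR O in hO h2 h3 *; set z := INR Z in h2 h3; set c := INR C0 in h1 h3.
set b := INR beta in hb h3 *; set r := INR rho in h2 *; set rb := INR rhob in h1 *.
have o0 : 0 < o by lra.
have rb0 : 0 <= rb by apply: pos_INR.
have z0 : 0 <= z by apply: pos_INR.
set s := sqrt (2 * (rb / o)).
have s0 : 0 <= s by apply: sqrt_pos.
have ss : s * s = 2 * (rb / o).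
  rewrite /s sqrt_sqrt //; apply: Rmult_le_pos; [lra | rewrite /Rdiv; apply: Rmult_le_pos; [lra | apply: Rlt_le; apply: Rinv_0_lt_compat; lra]].
have cs : c <= s * s * o.
  rewrite ss; field_simplify; lra.
have zb : z <= (s + 2 * b + 1) * o.
  apply: Rnot_lt_le => hz.
  have q1 : (s + 1) * o < z - 2 * b * o by nra.
  have q2 : (s + 2 * b + 1) * o * ((s + 1) * o) < z * (z - 2 * b * o).
    apply: Rmult_le_0_lt_compat => //; nra.
  have q3 : o * c <= o * (s * s * o) by apply: Rmult_le_compat_l; lra.
  have q4 : 0 <= (2 * s + 2 * b * s) * (o * o).
    apply: Rmult_le_pos; [nra | nra].
  nra.
have : r / o <= s + 2 * b + 2.
  apply Rmult_le_reg_r with o; [lra|]; replace (r / o * o) with r by (field; lra); lra.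
nra.
Qed.

End Real.

Theorem lemma4 (E : finType) (n : nat) (Sigma : 'I_n -> {set {set E}})
    (Sstar : profile E n) (beta T : nat)
    (Sbar : nat -> profile E n) (pibar : nat -> 'I_n)
    (S : nat -> profile E n) (pi : nat -> 'I_n) :
  is_optimal Sigma Sstar ->
  (0 < social_cost Sstar)%N ->
  (1 <= beta)%N ->
  T_covering Sigma T Sbar pibar -> beta_bounded beta T pibar ->
  T_covering Sigma T S pi -> beta_bounded beta T pi ->
  S 0%N = Sbar T ->
  (INR (rho Sstar T S pi) / INR (social_cost Sstar) <=
   2 * sqrt (2 * (INR (rho Sstar T Sbar pibar) / INR (social_cost Sstar)))
   + 4 * INR beta + 1)%Re.
Proof.
move=> [Hfs _] O0 b1 [_ Hstb Hcovb] _ [_ Hst _] Hb S0.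
apply: (@real_final _ _ (social_cost (S 0)) (Z T S Sstar)) => //.
- by rewrite S0; exact: (final_cost_le Hstb Hcovb Hfs).
- exact: rho_le.
- apply: leq_trans (CS T S O0) _; rewrite leq_mul2l; apply/orP; right.
  apply: leq_trans (M_sq Hst) _; rewrite leq_add2l leq_mul2l /=.
  exact: (costs_le Hst Hfs Hb).
Qed.
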